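(* Let $N\in\mathbb{N}$, $m,M\in(0,1)$ with $m<M$, and $a_1,\dots,a_N\in[m,M]$. For $i\in[N]$ let $M_i=\frac1N\min\{m+(N-1)M,\ (N-2)(a_i-m)+\sum_{j=1}^Na_j\}$. Let $P$ be the intersection of the box $C=[m,M_1]\times\cdots\times[m,M_N]$ with the closed half-spaces $H_i=\{z\in\mathbb{R}^N\mid\sum_{j=1}^Nz_j\le(2N-2)z_i-(N-2)m\}$, $i\in[N]$. Then $P$ is a closed convex polytope in $\mathbb{R}^N$. For $N>2$, $P$ has at most $2^N$ vertices, and its vertices are exactly the points $z^{(K)}$, $K\subseteq[N]$, defined by $z^{(K)}_k=B^{(K)}$ if $k\in K$ and $z^{(K)}_k=M_k$ if $k\in[N]\setminus K$, where $B^{(K)}=\frac{(N-2)m+\sum_{l\in[N]\setminus K}M_l}{2N-2-|K|}$. For $N=1$, $P=\{m\}$, and for $N=2$, $P=\{(t,t)\in\mathbb{R}^2\mid m\le t\le M_1\}$.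
   Context: $[N]=\{1,\dots,N\}$. *)

(* Defs.v *)
From HB Require Import structures.
From mathcomp Require Import all_boot all_order all_algebra.
From mathcomp Require Import all_classical all_reals all_analysis.
Set Implicit Arguments. Unset Strict Implicit. Unset Printing Implicit Defensive.
Import Order.TTheory GRing.Theory Num.Theory.
Import numFieldTopology.Exports numFieldNormedType.Exports.
Local Open Scope ring_scope.
Local Open Scope classical_set_scope.

(* Points of R^N are row vectors 'rV[R]_N; coordinate k is z ord0 k,
   with indices 'I_N = {0,...,N-1} standing for [N] = {1,...,N}. *)

Definition Mbound (R : realType) (N : nat) (m M : R) (a : 'I_N -> R) (i : 'I_N) : R :=
  N%:R^-1 * Num.min (m + (N%:R - 1) * M)
                    ((N%:R - 2) * (a i - m) + \sum_(j < N) a j).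

Definition boxC (R : realType) (N : nat) (m M : R) (a : 'I_N -> R) : set 'rV[R]_N :=
  [set z : 'rV[R]_N | forall k : 'I_N, m <= z ord0 k <= Mbound m M a k].

Definition halfH (R : realType) (N : nat) (m : R) (i : 'I_N) : set 'rV[R]_N :=
  [set z : 'rV[R]_N | \sum_(j < N) z ord0 j <= (2 * N%:R - 2) * z ord0 i - (N%:R - 2) * m].

Definition P8set (R : realType) (N : nat) (m M : R) (a : 'I_N -> R) : set 'rV[R]_N :=
  boxC m M a `&` [set z : 'rV[R]_N | forall i : 'I_N, halfH m i z].

Definition conv_hull_seq (R : realType) (N : nat) (s : seq 'rV[R]_N) : set 'rV[R]_N :=
  [set z : 'rV[R]_N | exists w : 'I_(size s) -> R,
     (forall i, 0 <= w i) /\ \sum_(i < size s) w i = 1 /\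
     z = \sum_(i < size s) w i *: s`_i].

Definition is_polytope (R : realType) (N : nat) (P : set 'rV[R]_N) : Prop :=
  exists s : seq 'rV[R]_N, P = conv_hull_seq s.

Definition is_vertex (R : realType) (N : nat) (P : set 'rV[R]_N) (v : 'rV[R]_N) : Prop :=
  P v /\ forall x y (t : R), P x -> P y -> 0 < t -> t < 1 ->
    v = t *: x + (1 - t) *: y -> x = y.

Definition BK (R : realType) (N : nat) (m M : R) (a : 'I_N -> R) (K : {set 'I_N}) : R :=
  ((N%:R - 2) * m + \sum_(l < N | l \notin K) Mbound m M a l)
    / (2 * N%:R - 2 - #|K|%:R).

Definition zK (R : realType) (N : nat) (m M : R) (a : 'I_N -> R) (K : {set 'I_N}) : 'rV[R]_N :=
  \row_(k < N) (if k \in K then BK m M a K else Mbound m M a k).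

(* Main.v *)
Require Import Defs.
From HB Require Import structures.
From mathcomp Require Import all_boot all_order all_algebra.
From mathcomp Require Import all_classical all_reals all_analysis.
From mathcomp Require Import ring lra.
Import Order.TTheory GRing.Theory Num.Theory.
Import numFieldTopology.Exports numFieldNormedType.Exports.
Set Implicit Arguments. Unset Strict Implicit. Unset Printing Implicit Defensive.
Local Open Scope ring_scope.
Local Open Scope classical_set_scope.

Definition PS (R : realType) (N : nat) (m : R) (Mv : 'I_N -> R) : set 'rV[R]_N :=
  [set z | (forall k, m <= z ord0 k <= Mv k) /\
     (forall i, \sum_(j < N) z ord0 j <= (2 * N%:R - 2) * z ord0 i - (N%:R - 2) * m)].

Definition Bp (R : realType) (N : nat) (m : R) (Mv : 'I_N -> R) (K : {set 'I_N}) : R :=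
  if K == [set: 'I_N]%SET then m else
  ((N%:R - 2) * m + \sum_(l < N | l \notin K) Mv l) / (2 * N%:R - 2 - #|K|%:R).

Definition ctr (R : realType) (N : nat) (m : R) (Mv : 'I_N -> R) (K : {set 'I_N}) : 'rV[R]_N :=
  \row_(k < N) (if k \in K then Bp m Mv K else Mv k).

Lemma P8E (R : realType) (N : nat) (m M : R) (a : 'I_N -> R) :
  P8set m M a = PS m (Mbound m M a).
Proof. by []. Qed.

Lemma sumrcK (R : realType) (N : nat) (K : {set 'I_N}) (x : R) :
  \sum_(j < N | j \in K) x = #|K|%:R * x.
Proof.
rewrite sumr_const mulr_natl; congr (_ *+ _); apply: eq_card => j; by [].
Qed.

Lemma sumrcN (R : realType) (N : nat) (x : R) : \sum_(j < N) x = N%:R * x.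
Proof. by rewrite sumr_const card_ord mulr_natl. Qed.

Lemma sum_split (R : realType) (N : nat) (K : {set 'I_N}) (f : 'I_N -> R) :
  \sum_(j < N) f j = \sum_(j < N | j \in K) f j + \sum_(j < N | j \notin K) f j.
Proof. by rewrite (bigID (fun j => j \in K)). Qed.

Lemma card_facts (N : nat) (K : {set 'I_N}) : K != finset.set0 -> K != [set: 'I_N]%SET ->
  (1 <= #|K|)%N /\ (#|K|.+1 <= N)%N.
Proof.
move=> /set0Pn [k kK] KT; split; first by apply/card_gt0P; exists k.
have := proper_card (A:=K) (B:=[set: 'I_N]%SET); rewrite properT KT cardsT card_ord.
by move/(_ isT).
Qed.

Lemma sum_ctr (R : realType) (N : nat) (m : R) (Mv : 'I_N -> R) (K : {set 'I_N}) :
  K != finset.set0 ->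
  \sum_(j < N) ctr m Mv K ord0 j = (2 * N%:R - 2) * Bp m Mv K - (N%:R - 2) * m.
Proof.
move=> K0; rewrite (sum_split K).
rewrite (eq_bigr (fun _ => Bp m Mv K)); last by move=> j jK; rewrite mxE jK.
rewrite [X in _ + X = _](eq_bigr (fun j => Mv j)); last by move=> j /negbTE jK; rewrite mxE jK.
rewrite sumrcK.
rewrite /Bp; case: ifP => [/eqP KT|KT].
  rewrite big1; last by move=> j; rewrite KT inE.
  rewrite KT cardsT card_ord addr0; ring.
have [h1 h2] := card_facts K0 (negbT KT).
have hc : 2 * N%:R - 2 - #|K|%:R != 0 :> R.
  have : (#|K|.+1%:R <= N%:R :> R) by rewrite ler_nat.
  rewrite -natr1 => h; apply/eqP => h'.
  have h0 : (1 : R) <= #|K|%:R by rewrite ler1n.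
  lra.
field => //.
Qed.

Lemma Bp_facts (R : realType) (N : nat) (m : R) (Mv : 'I_N -> R) (K : {set 'I_N}) :
  K != finset.set0 -> K != [set: 'I_N]%SET ->
  [/\ Bp m Mv K * (2 * N%:R - 2 - #|K|%:R) = (N%:R - 2) * m + \sum_(l < N | l \notin K) Mv l,
      0 < 2 * N%:R - 2 - #|K|%:R :> R, (1 : R) <= #|K|%:R & #|K|%:R + 1 <= (N%:R : R)].
Proof.
move=> K0 KT; have [h1 h2] := card_facts K0 KT.
have h1' : (1 : R) <= #|K|%:R by rewrite ler1n.
have h2' : #|K|%:R + 1 <= (N%:R : R) by rewrite natr1 ler_nat.
have hc : 0 < 2 * N%:R - 2 - #|K|%:R :> R by lra.
split => //; rewrite /Bp (negbTE KT) divfK //; exact: lt0r_neq0.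
Qed.

Lemma ctr_low (R : realType) (N : nat) (m : R) (Mv : 'I_N -> R) (K : {set 'I_N}) z :
  K != finset.set0 -> PS m Mv z -> (forall l, l \notin K -> z ord0 l = Mv l) ->
  forall k, k \in K -> Bp m Mv K <= z ord0 k.
Proof.
move=> K0 [hbox hhalf] hU k kK.
have [KT|KT] := eqVneq K [set: 'I_N]%SET.
  by rewrite /Bp KT eqxx; case/andP: (hbox k).
have [hb hpos h1 h2] := Bp_facts m Mv K0 KT.
set b := Bp m Mv K in hb *.
set kn := #|K|%:R in hb hpos h1 h2.
set D := \sum_(l < N | l \notin K) Mv l in hb.
set s := \sum_(j < N | j \in K) z ord0 j.
have hs : \sum_(j < N) z ord0 j = s + D.
  rewrite (sum_split K); congr (_ + _); apply: eq_bigr => l lK; exact: hU.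
have hsum : kn * (s + D) <= (2 * N%:R - 2) * s - kn * ((N%:R - 2) * m).
  have : \sum_(j < N | j \in K) \sum_(i < N) z ord0 i <=
     \sum_(j < N | j \in K) ((2 * N%:R - 2) * z ord0 j - (N%:R - 2) * m).
    by apply: ler_sum => j _; exact: hhalf.
  rewrite sumrB -mulr_sumr !sumrcK hs.
  by rewrite -/s.
have hk := hhalf k; rewrite hs in hk.
have hN : 0 < 2 * N%:R - 2 :> R by lra.
have e1 : kn * b <= s.
  rewrite -(ler_pM2l hpos).
  have -> : (2 * N%:R - 2 - kn) * (kn * b) = kn * (b * (2 * N%:R - 2 - kn)) by ring.
  rewrite hb; lra.
rewrite -(ler_pM2l hN); lra.
Qed.

Lemma sum_notin_const (R : realType) (N : nat) (K : {set 'I_N}) (c : R) :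
  \sum_(l < N | l \notin K) c = N%:R * c - #|K|%:R * c.
Proof.
have := sum_split K (fun _ => c); rewrite sumrcN sumrcK => ->; ring.
Qed.

Lemma Bp_ge (R : realType) (N : nat) (m : R) (Mv : 'I_N -> R) (K : {set 'I_N}) :
  (forall i, m <= Mv i) -> K != finset.set0 -> m <= Bp m Mv K.
Proof.
move=> hM1 K0; have [KT|KT] := eqVneq K [set: 'I_N]%SET; first by rewrite /Bp KT eqxx.
have [hb hpos h1 h2] := Bp_facts m Mv K0 KT.
have hD : \sum_(l < N | l \notin K) m <= \sum_(l < N | l \notin K) Mv l.
  by apply: ler_sum => l _; exact: hM1.
rewrite sum_notin_const in hD.
rewrite -(ler_pM2r hpos) hb; lra.
Qed.

Lemma Bp_le (R : realType) (N : nat) (m : R) (Mv : 'I_N -> R) (K : {set 'I_N}) :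
  (forall i, m <= Mv i) ->
  (forall i, \sum_(j < N) Mv j <= (2 * N%:R - 2) * Mv i - (N%:R - 2) * m) ->
  K != finset.set0 -> forall j, Bp m Mv K <= Mv j.
Proof.
move=> hM1 hM2 K0 j; have [KT|KT] := eqVneq K [set: 'I_N]%SET; first by rewrite /Bp KT eqxx.
have [hb hpos h1 h2] := Bp_facts m Mv K0 KT.
set b := Bp m Mv K in hb *.
set kn := #|K|%:R in hb hpos h1 h2.
set D := \sum_(l < N | l \notin K) Mv l in hb.
set X := \sum_(l < N | l \in K) Mv l.
set T := \sum_(l < N) Mv l in hM2.
have hT : T = X + D by rewrite /T (sum_split K).
have hsum : kn * T <= (2 * N%:R - 2) * X - kn * ((N%:R - 2) * m).
  have : \sum_(l < N | l \in K) T <=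
     \sum_(l < N | l \in K) ((2 * N%:R - 2) * Mv l - (N%:R - 2) * m).
    by apply: ler_sum => l _; exact: hM2.
  by rewrite sumrB -mulr_sumr !sumrcK.
have hN : 0 < 2 * N%:R - 2 :> R by lra.
have e1 : (2 * N%:R - 2) * b <= T + (N%:R - 2) * m.
  rewrite -(ler_pM2l hpos).
  have -> : (2 * N%:R - 2 - kn) * ((2 * N%:R - 2) * b) =
     (2 * N%:R - 2) * (b * (2 * N%:R - 2 - kn)) by ring.
  have hD : D = T - X by rewrite hT; ring.
  rewrite hb hD; lra.
rewrite -(ler_pM2l hN); have := hM2 j; lra.
Qed.

Lemma ctr_in (R : realType) (N : nat) (m : R) (Mv : 'I_N -> R) (K : {set 'I_N}) :
  (forall i, m <= Mv i) ->
  (forall i, \sum_(j < N) Mv j <= (2 * N%:R - 2) * Mv i - (N%:R - 2) * m) ->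
  PS m Mv (ctr m Mv K).
Proof.
move=> hM1 hM2; have [K0|K0] := eqVneq K finset.set0.
  have e : forall k, ctr m Mv K ord0 k = Mv k by move=> k; rewrite mxE K0 inE.
  split=> [k|i]; first by rewrite e hM1 lexx.
  rewrite e (eq_bigr (fun k => Mv k)) //; move=> k _; exact: e.
have hge := Bp_ge hM1 K0; have hle := Bp_le hM1 hM2 K0.
have hlo : forall k, Bp m Mv K <= ctr m Mv K ord0 k.
  by move=> k; rewrite mxE; case: ifP => _ //.
split=> [k|i].
  rewrite mxE; case: ifP => _; first by rewrite hge hle.
  by rewrite hM1 lexx.
rewrite sum_ctr //.
have hN : 0 <= 2 * N%:R - 2 :> R.
  case/set0Pn: K0 => k _; have : (1 <= N)%N by exact: leq_ltn_trans (leq0n k) (ltn_ord k).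
  rewrite -(ler_nat R) => h; lra.
have := hlo i => h; rewrite lerD2r; exact: ler_wpM2l.
Qed.

Lemma comb_eq (R : realType) (t a b c : R) : 0 < t -> t < 1 -> a <= c -> b <= c ->
  c = t * a + (1 - t) * b -> a = c /\ b = c.
Proof.
move=> t0 t1 ac bc e.
have h1 : 0 <= t * (c - a) by rewrite mulr_ge0 // ?subr_ge0 // ltW.
have h2 : 0 <= (1 - t) * (c - b) by rewrite mulr_ge0 // subr_ge0 // ltW.
have h3 : t * (c - a) + (1 - t) * (c - b) = 0 by rewrite e; ring.
have z1 : t * (c - a) = 0 by lra.
have z2 : (1 - t) * (c - b) = 0 by lra.
have n0 : t != 0 by rewrite gt_eqF.
have n1 : 1 - t != 0 by rewrite subr_eq0 gt_eqF.
have ea : c - a = 0 by apply: (mulfI n0); rewrite mulr0.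
have eb : c - b = 0 by apply: (mulfI n1); rewrite mulr0.
split; lra.
Qed.

Lemma comb_eq' (R : realType) (t a b c : R) : 0 < t -> t < 1 -> c <= a -> c <= b ->
  c = t * a + (1 - t) * b -> a = c /\ b = c.
Proof.
move=> t0 t1 ac bc e.
have [] := @comb_eq R t (- a) (- b) (- c) t0 t1; rewrite ?lerN2 //.
  by rewrite e; ring.
by move=> h1 h2; split; apply: oppr_inj.
Qed.

Lemma ctr_vertex (R : realType) (N : nat) (m : R) (Mv : 'I_N -> R) (K : {set 'I_N}) :
  (forall i, m <= Mv i) ->
  (forall i, \sum_(j < N) Mv j <= (2 * N%:R - 2) * Mv i - (N%:R - 2) * m) ->
  is_vertex (PS m Mv) (ctr m Mv K).
Proof.
move=> hM1 hM2; split; first exact: ctr_in.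
move=> x y t hx hy t0 t1 hv.
have hc : forall k, ctr m Mv K ord0 k = t * x ord0 k + (1 - t) * y ord0 k.
  by move=> k; rewrite hv !mxE.
have hU : forall l, l \notin K -> x ord0 l = Mv l /\ y ord0 l = Mv l.
  move=> l lK; have := hc l; rewrite mxE (negbTE lK) => e.
  case/andP: (hx.1 l) => _ h1; case/andP: (hy.1 l) => _ h2.
  exact: comb_eq t0 t1 h1 h2 e.
apply/rowP => k.
have [kK|kK] := boolP (k \in K); last first.
  by have [-> ->] := hU k kK.
have K0 : K != finset.set0 by apply/set0Pn; exists k.
have lx := ctr_low K0 hx (fun l lK => (hU l lK).1) kK.
have ly := ctr_low K0 hy (fun l lK => (hU l lK).2) kK.
have := hc k; rewrite mxE kK => e.
by have [-> ->] := comb_eq' t0 t1 lx ly e.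
Qed.

Definition myconvex (R : realType) (N : nat) (P : set 'rV[R]_N) :=
  forall x y (t : R), P x -> P y -> 0 <= t <= 1 -> P (t *: x + (1 - t) *: y).

Lemma mem_conv (R : realType) (N : nat) (s : seq 'rV[R]_N) x :
  x \in s -> conv_hull_seq s x.
Proof.
move=> xs; have xs' : (index x s < size s)%N by rewrite index_mem.
set j0 : 'I_(size s) := Ordinal xs'.
exists (fun i => (i == j0)%:R); split; first by move=> i; rewrite ler0n.
split.
  rewrite (bigD1 j0) //= eqxx big1 ?addr0 // => i /negbTE ->; by [].
rewrite (bigD1 j0) //= eqxx scale1r big1 ?addr0 ?nth_index //.
by move=> i /negbTE ->; rewrite scale0r.
Qed.

Lemma conv_convex (R : realType) (N : nat) (s : seq 'rV[R]_N) :
  myconvex (conv_hull_seq s).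
Proof.
move=> x y t [wx [wx0 [wx1 ->]]] [wy [wy0 [wy1 ->]]] /andP [t0 t1].
exists (fun i => t * wx i + (1 - t) * wy i); split.
  move=> i; rewrite addr_ge0 // mulr_ge0 // subr_ge0 //.
split.
  by rewrite big_split /= -!mulr_sumr wx1 wy1; ring.
rewrite !scaler_sumr -big_split /=; apply: eq_bigr => i _.
by rewrite [RHS]scalerDl !scalerA.
Qed.

Fixpoint inconv (R : realType) (N : nat) (s : seq 'rV[R]_N) (z : 'rV[R]_N) : Prop :=
  match s with
  | [::] => False
  | x :: s' => z = x \/ exists t : R, (0 <= t < 1) /\
                 exists q, inconv s' q /\ z = t *: x + (1 - t) *: q
  end.

Lemma conv_inconv (R : realType) (N : nat) (s : seq 'rV[R]_N) z :
  conv_hull_seq s z -> inconv s z.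
Proof.
elim: s z => [|x s IH] z [w [w0 [w1 ->]]].
  by move: w1; rewrite big_ord0 => /eqP; rewrite eq_sym oner_eq0.
have e : forall i : 'I_(size s), (x :: s)`_(lift ord0 i) = s`_i.
  by move=> i; rewrite lift0.
move: w1; rewrite big_ord_recl => w1.
rewrite big_ord_recl (eq_bigr (fun i => w (lift ord0 i) *: s`_i)); last first.
  by move=> i _; rewrite e.
have hr : 0 <= \sum_(i < size s) w (lift ord0 i) by apply: sumr_ge0 => i _.
have [t1|t1] := eqVneq (w ord0) 1.
  left; rewrite t1 scale1r big1 ?addr0 // => i _.
  have hz : \sum_(i < size s) w (lift ord0 i) = 0 by lra.
  by rewrite (psumr_eq0P (fun i _ => w0 (lift ord0 i)) hz) // scale0r.
have hlt : w ord0 < 1 by rewrite lt_neqAle t1 /=; lra.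
have hne : 1 - w ord0 != 0 by rewrite subr_eq0 eq_sym.
right; exists (w ord0); split; first by rewrite w0 hlt.
exists (\sum_(i < size s) (w (lift ord0 i) / (1 - w ord0)) *: s`_i); split.
  apply: IH; exists (fun i => w (lift ord0 i) / (1 - w ord0)); split.
    by move=> i; rewrite divr_ge0 // subr_ge0 ltW.
  split => //; rewrite -mulr_suml.
  have -> : \sum_(i < size s) w (lift ord0 i) = 1 - w ord0 by lra.
  by rewrite divff.
congr (_ + _); rewrite scaler_sumr; apply: eq_bigr => i _.
by rewrite scalerA mulrC divfK.
Qed.

Lemma inconv_sub (R : realType) (N : nat) (P : set 'rV[R]_N) (s : seq 'rV[R]_N) z :
  (forall x, x \in s -> P x) -> myconvex P -> inconv s z -> P z.
Proof.
elim: s z => [|x s IH] z //= hs hc [->|[t [/andP [t0 t1] [q [hq ->]]]]].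
  by apply: hs; rewrite mem_head.
apply: (hc); first by apply: hs; rewrite mem_head.
  by apply: (IH q _ hc hq) => y ys; apply: hs; rewrite in_cons ys orbT.
by rewrite t0 ltW.
Qed.

Lemma vertex_in (R : realType) (N : nat) (P : set 'rV[R]_N) (s : seq 'rV[R]_N) v :
  (forall x, x \in s -> P x) -> myconvex P -> is_vertex P v -> inconv s v -> v \in s.
Proof.
elim: s => [|x s IH] //= hs hc hv [->|[t [/andP [t0 t1] [q [hq e]]]]]; first by rewrite mem_head.
have hs' : forall y, y \in s -> P y by move=> y ys; apply: hs; rewrite in_cons ys orbT.
have [t00|tn0] := eqVneq t 0.
  move: e; rewrite t00 scale0r add0r subr0 scale1r => e; subst q.
  by rewrite in_cons (IH hs' hc hv hq) orbT.
have tp : 0 < t by rewrite lt_neqAle eq_sym tn0 t0.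
have Px : P x by apply: hs; rewrite mem_head.
have Pq : P q by apply: (inconv_sub hs' hc hq).
have xq := hv.2 x q t Px Pq tp t1 e.
by rewrite e -xq -scalerDl addrC subrK scale1r mem_head.
Qed.

Lemma PS_convex (R : realType) (N : nat) (m : R) (Mv : 'I_N -> R) : myconvex (PS m Mv).
Proof.
move=> x y t [bx hx] [bY hy] /andP [t0 t1].
have t1' : 0 <= 1 - t by rewrite subr_ge0.
split=> [k|i].
  rewrite !mxE; case/andP: (bx k) => a1 a2; case/andP: (bY k) => b1 b2.
  have := ler_wpM2l t0 a1; have := ler_wpM2l t0 a2.
  have := ler_wpM2l t1' b1; have := ler_wpM2l t1' b2.
  move=> u1 u2 u3 u4; apply/andP; split; lra.
rewrite (eq_bigr (fun j => t * x ord0 j + (1 - t) * y ord0 j)); last by move=> j _; rewrite !mxE.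
rewrite big_split /= -!mulr_sumr !mxE.
have := ler_wpM2l t0 (hx i); have := ler_wpM2l t1' (hy i); move=> u1 u2; lra.
Qed.

Definition ctrs (R : realType) (N : nat) (m : R) (Mv : 'I_N -> R) : seq 'rV[R]_N :=
  map (ctr m Mv) (enum (powerset [set: 'I_N]%SET)).

Lemma ctr_mem (R : realType) (N : nat) (m : R) (Mv : 'I_N -> R) K :
  ctr m Mv K \in ctrs m Mv.
Proof. by apply: map_f; rewrite mem_enum powersetE finset.subsetT. Qed.

Lemma ctrs_mem (R : realType) (N : nat) (m : R) (Mv : 'I_N -> R) x :
  x \in ctrs m Mv -> exists K, x = ctr m Mv K.
Proof. by case/mapP => K _ ->; exists K. Qed.

Lemma z_ctr0 (R : realType) (N : nat) (m : R) (Mv : 'I_N -> R) (U : {set 'I_N}) (z : 'rV[R]_N) :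
  ~: U = finset.set0 -> (forall l, l \in U -> z ord0 l = Mv l) -> z = ctr m Mv (~: U).
Proof.
move=> K0 hU; apply/rowP => k; rewrite mxE K0 inE; apply: hU.
have : k \notin ~: U by rewrite K0 inE.
by rewrite inE negbK.
Qed.

Lemma PS_conv_aux (R : realType) (N : nat) (m : R) (Mv : 'I_N -> R) :
  (forall i, m <= Mv i) ->
  (forall i, \sum_(j < N) Mv j <= (2 * N%:R - 2) * Mv i - (N%:R - 2) * m) ->
  forall n (U : {set 'I_N}) z, (#|~: U| <= n)%N -> PS m Mv z ->
  (forall l, l \in U -> z ord0 l = Mv l) -> conv_hull_seq (ctrs m Mv) z.
Proof.
move=> hM1 hM2 n; elim: n => [|n IH] U z hc hz hU.
  have K0 : ~: U = finset.set0 by apply/eqP; rewrite -cards_eq0 -leqn0.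
  by rewrite (z_ctr0 m K0 hU); exact/mem_conv/ctr_mem.
have [K0|K0] := eqVneq (~: U) finset.set0.
  by rewrite (z_ctr0 m K0 hU); exact/mem_conv/ctr_mem.
set K := ~: U in hc K0.
have hU' : forall l, l \notin K -> z ord0 l = Mv l.
  by move=> l; rewrite inE negbK; exact: hU.
set b := Bp m Mv K.
have hlo : forall k, k \in K -> b <= z ord0 k := ctr_low K0 hz hU'.
have hge : m <= b := Bp_ge hM1 K0.
have hle : forall j, b <= Mv j := Bp_le hM1 hM2 K0.
have hup : forall k, z ord0 k <= Mv k by move=> k; case/andP: (hz.1 k).
set r := fun k => (z ord0 k - b) / (Mv k - b).
have r0 : forall k, k \in K -> 0 <= r k.
  by move=> k kK; rewrite /r divr_ge0 // subr_ge0 // hlo.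
have [k0 k0K] := set0Pn _ K0.
case: (arg_maxP r k0K) => ks ksK hmax.
have ksK' : ks \in K by [].
set lam := r ks in hmax.
have hmax' : forall k, k \in K -> r k <= lam by move=> k kK; exact: hmax.
have lam0 : 0 <= lam by exact: r0.
have [l0|ln0] := eqVneq lam 0.
  have -> : z = ctr m Mv K.
    apply/rowP => k; rewrite mxE -/b; case: ifP => kK; last by rewrite hU' // kK.
    have : r k = 0 by apply/eqP; rewrite eq_le r0 // andbT -l0 hmax'.
    move/eqP; rewrite /r mulf_eq0 invr_eq0 !subr_eq0 => /orP [/eqP //|/eqP e].
    have := hup k; have := hlo k kK; lra.
  exact/mem_conv/ctr_mem.
have lp : 0 < lam by rewrite lt_neqAle eq_sym ln0 lam0.
have hks : Mv ks - b != 0.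
  apply: contraNneq ln0 => e; by rewrite /lam /r e invr0 mulr0.
have hks' : 0 < Mv ks - b by rewrite lt_neqAle eq_sym hks subr_ge0 hle.
have lam1 : lam <= 1.
  by rewrite /lam /r ler_pdivrMr // mul1r lerD2r hup.
set p := ctr m Mv K.
set q := p + lam^-1 *: (z - p).
have hpK : forall k, k \in K -> p ord0 k = b by move=> k kK; rewrite mxE kK.
have hpU : forall k, k \notin K -> p ord0 k = Mv k by move=> k kK; rewrite mxE (negbTE kK).
have hq : forall k, q ord0 k = p ord0 k + lam^-1 * (z ord0 k - p ord0 k).
  by move=> k; rewrite !mxE.
have hqU : forall k, k \notin K -> q ord0 k = Mv k.
  by move=> k kK; rewrite hq hpU // hU' // subrr mulr0 addr0.
have hqK : forall k, k \in K -> q ord0 k = b + lam^-1 * (z ord0 k - b).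
  by move=> k kK; rewrite hq hpK.
have hqks : q ord0 ks = Mv ks.
  rewrite hqK // /lam /r; field; apply/andP; split => //.
  have := hlo ks ksK; rewrite le_eqVlt => /orP [/eqP e|e].
    by move: ln0; rewrite /lam /r -e subrr mul0r eqxx.
  by rewrite subr_eq0 gt_eqF.
have hbox : forall k, m <= q ord0 k <= Mv k.
  move=> k; have [kK|kK] := boolP (k \in K); last by rewrite hqU // hM1 lexx.
  rewrite hqK //; apply/andP; split.
    have : 0 <= lam^-1 * (z ord0 k - b) by rewrite mulr_ge0 // ?invr_ge0 // subr_ge0 hlo.
    lra.
  have [e|e] := eqVneq (Mv k - b) 0.
    have : z ord0 k = b by apply/eqP; rewrite eq_le hlo // andbT; have := hup k; lra.
    move=> ->; rewrite subrr mulr0; lra.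
  have ep : 0 < Mv k - b by rewrite lt_neqAle eq_sym e subr_ge0 hle.
  have := hmax' k kK; rewrite /r ler_pdivrMr // => h.
  rewrite -lerBrDl mulrC ler_pdivrMr //; lra.
have hPq : PS m Mv q.
  split => // i; have [iK|iK] := boolP (i \in K); last first.
    rewrite hqU //; apply: le_trans (hM2 i); apply: ler_sum => j _.
    by case/andP: (hbox j).
  have -> : \sum_(j < N) q ord0 j =
     \sum_(j < N) p ord0 j + lam^-1 * (\sum_(j < N) z ord0 j - \sum_(j < N) p ord0 j).
    by rewrite (eq_bigr _ (fun j _ => hq j)) big_split /= -mulr_sumr sumrB.
  rewrite sum_ctr // hqK // -/b.
  have il : 0 <= lam^-1 by rewrite invr_ge0.
  have := ler_wpM2l il (hz.2 i) => h.
  lra.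
have hcq : conv_hull_seq (ctrs m Mv) q.
  apply: (IH (ks |: U)) => //.
    have e : ~: (ks |: U) = K :\ ks by apply/setP => l; rewrite !inE negb_or andbC.
    rewrite e; move: hc; rewrite (cardsD1 ks K) ksK' add1n ltnS; by [].
  move=> l; rewrite in_setU1 => /orP [/eqP -> //|lU].
  by apply: hqU; rewrite inE negbK.
have -> : z = lam *: q + (1 - lam) *: p.
  apply/rowP => k; rewrite !mxE; field; exact: ln0.
apply: conv_convex => //; first exact/mem_conv/ctr_mem.
by rewrite lam0 lam1.
Qed.

Lemma cont_sum (R : realType) (N : nat) (T : topologicalType) (r : seq 'I_N)
   (f : 'I_N -> T -> R) :
  (forall j, continuous (f j)) -> continuous (fun x => \sum_(j <- r) f j x).
Proof.
move=> hf; elim: r => [|j r IH].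
  have -> : (fun x => \sum_(j <- [::]) f j x) = fun=> 0.
    by apply: funext => y; rewrite big_nil.
  exact: cst_continuous.
have -> : (fun x => \sum_(k <- j :: r) f k x) = (fun x => f j x + \sum_(k <- r) f k x).
  by apply: funext => y; rewrite big_cons.
move=> x; apply: cvgD; [exact: hf | exact: IH].
Qed.

Lemma closed_lin (R : realType) (N : nat) (g : 'rV[R]_N -> R) :
  continuous g -> closed [set z | g z <= 0].
Proof.
move=> hg; have := (continuous_closedP g).1 hg _ (@closed_le R 0).
by [].
Qed.

Lemma PS_closed (R : realType) (N : nat) (m : R) (Mv : 'I_N -> R) : closed (PS m Mv).
Proof.
have hc : forall k : 'I_N, continuous (fun z : 'rV[R]_N => z ord0 k).
  by move=> k; exact: coord_continuous.
set C := fun i : 'I_N =>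
  [set z : 'rV[R]_N | m - z ord0 i <= 0] `&` [set z | z ord0 i - Mv i <= 0] `&`
  [set z | \sum_(j < N) z ord0 j - ((2 * N%:R - 2) * z ord0 i - (N%:R - 2) * m) <= 0].
have -> : PS m Mv = \bigcap_(i in [set: 'I_N]) C i.
  apply/seteqP; split => z /=.
    move=> [hb hh] i _; case/andP: (hb i) => h1 h2.
    rewrite /C /=; split; [split|]; have := hh i; lra.
  move=> h; split => [k|i].
    have [[h1 h2] _] := h k I; move: h1 h2 => /= h1 h2; apply/andP; split; lra.
  have [_ h3] := h i I; move: h3 => /= h3; lra.
have hcst : forall (c : R) (x : 'rV[R]_N), {for x, continuous (fun=> c : R)}.
  by move=> c x; exact: cst_continuous.
apply: closed_bigI => i _; rewrite /C; apply: closedI; first apply: closedI.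
- apply: (closed_lin (g := fun z : 'rV[R]_N => m - z ord0 i)) => x.
  exact: (continuousB (hcst m x) (hc i x)).
- apply: (closed_lin (g := fun z : 'rV[R]_N => z ord0 i - Mv i)) => x.
  exact: (continuousB (hc i x) (hcst (Mv i) x)).
- apply: (closed_lin (g := fun z : 'rV[R]_N => \sum_(j < N) z ord0 j -
      ((2 * N%:R - 2) * z ord0 i - (N%:R - 2) * m))) => x.
  have h0 : continuous (fun z : 'rV[R]_N => \sum_(j < N) z ord0 j).
    by apply: cont_sum => j; exact: hc.
  have h2 : {for x, continuous (fun z : 'rV[R]_N => (2 * N%:R - 2) * z ord0 i)}.
    exact: (continuousM (hcst _ x) (hc i x)).
  have h3 : {for x, continuous (fun z : 'rV[R]_N =>
       (2 * N%:R - 2) * z ord0 i - (N%:R - 2) * m)}.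
    exact: (continuousB h2 (hcst _ x)).
  exact: (continuousB (h0 x) h3).
Qed.

Lemma Mb_facts (R : realType) (N : nat) (m M : R) (a : 'I_N -> R)
  (hm : 0 < m) (hmM : m < M) (ha : forall i : 'I_N, (m <= a i)%R && (a i <= M)%R) :
  (1 <= N)%N ->
  (forall i, m <= Mbound m M a i) /\
  (forall i, \sum_(j < N) Mbound m M a j <=
             (2 * N%:R - 2) * Mbound m M a i - (N%:R - 2) * m).
Proof.
move=> N1; have [N1'|N2] := eqVneq N 1%N.
  subst N.
  have e : forall i : 'I_1, Mbound m M a i = m.
    move=> i; rewrite /Mbound (ord1 i) big_ord1 invr1 mul1r.
    have -> : (1%:R - 1) * M = 0 :> R by rewrite subrr mul0r.
    have -> : (1%:R - 2) * (a ord0 - m) + a ord0 = m :> R by ring.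
    by rewrite addr0 minxx.
  split=> [i|i]; first by rewrite e.
  rewrite big_ord1 !e; lra.
have n2 : (2 <= N)%N by rewrite ltn_neqAle eq_sym N2 N1.
set n : R := N%:R.
have hn : 2 <= n by rewrite /n (ler_nat R 2 N).
have hnp : 0 < n by lra.
set S := \sum_(j < N) a j.
set A := m + (n - 1) * M.
set X := fun j => (n - 2) * (a j - m) + S.
have eM : forall j, Mbound m M a j = n^-1 * Num.min A (X j) by [].
have hS : n * m <= S.
  have : \sum_(j < N) m <= S by apply: ler_sum => j _; case/andP: (ha j).
  by rewrite sumrcN.
have hA : n * m <= A.
  have : (n - 1) * m <= (n - 1) * M by rewrite ler_wpM2l ?ltW //; lra.
  rewrite /A; lra.
have hX : forall j, n * m <= X j.
  move=> j; have : 0 <= (n - 2) * (a j - m).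
    by rewrite mulr_ge0 // subr_ge0 //; case/andP: (ha j).
  rewrite /X; lra.
split=> [i|i].
  by rewrite eM ler_pdivlMl // le_min hA hX.
rewrite (eq_bigr _ (fun j _ => eM j)) -mulr_sumr eM.
have e2 : forall y : R, (2 * n - 2) * (n^-1 * y) - (n - 2) * m =
    n^-1 * ((2 * n - 2) * y - n * (n - 2) * m).
  by move=> y; field; rewrite gt_eqF.
rewrite e2 ler_pM2l ?invr_gt0 //.
have [hAX|hAX] := leP A (X i).

  have : \sum_(j < N) Num.min A (X j) <= \sum_(j < N) A.
    by apply: ler_sum => j _; rewrite ge_min lexx.
  rewrite sumrcN -/n => h.
  have : 0 <= (n - 2) * (A - n * m) by rewrite mulr_ge0 // subr_ge0 //; lra.
  lra.

have : \sum_(j < N) Num.min A (X j) <= \sum_(j < N) X j.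
  by apply: ler_sum => j _; rewrite ge_min lexx orbT.
have -> : \sum_(j < N) X j = (n - 2) * (S - n * m) + n * S.
  rewrite /X big_split /= -mulr_sumr sumrB !sumrcN -/S -/n.
  by [].
move=> h.
have : 0 <= ((2 * n - 2) * (n - 2)) * (a i - m).
  rewrite mulr_ge0 // ?subr_ge0; last by case/andP: (ha i).
  rewrite mulr_ge0 //; lra.
rewrite /X; lra.
Qed.

Lemma Mb1 (R : realType) (m M : R) (a : 'I_1 -> R) i : Mbound m M a i = m.
Proof.
rewrite /Mbound (ord1 i) big_ord1 invr1 mul1r.
have -> : (1%:R - 1) * M = 0 :> R by rewrite subrr mul0r.
have -> : (1%:R - 2) * (a ord0 - m) + a ord0 = m :> R by ring.
by rewrite addr0 minxx.
Qed.

Lemma Mb2 (R : realType) (m M : R) (a : 'I_2 -> R) i j : Mbound m M a i = Mbound m M a j.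
Proof.
have e : (2%:R - 2 : R) = 0 by rewrite subrr.
by rewrite /Mbound e !mul0r !add0r.
Qed.

Lemma I2_cases (k : 'I_2) : k = ord0 \/ k = lift ord0 ord0.
Proof. by case: k => [[|[|k]] hk]; [left; apply: val_inj|right; apply: val_inj|move: hk]. Qed.

Lemma sum_I2 (R : realType) (f : 'I_2 -> R) : \sum_(j < 2) f j = f ord0 + f (lift ord0 ord0).
Proof. by rewrite big_ord_recl big_ord1. Qed.

Lemma zK_ctr (R : realType) (N : nat) (m M : R) (a : 'I_N -> R) K :
  (2 < N)%N -> zK m M a K = ctr m (Mbound m M a) K.
Proof.
move=> N3; apply/rowP => k; rewrite !mxE; case: ifP => // _.
rewrite /BK /Bp; case: ifP => // /eqP KT.
rewrite big_pred0; last by move=> l; rewrite KT inE.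
rewrite KT cardsT card_ord addr0.
have hn : (3 : R) <= N%:R by rewrite (ler_nat R 3 N).
have hne : 2 * N%:R - 2 - N%:R != 0 :> R by apply: lt0r_neq0; lra.
by apply: (mulIf hne); rewrite divfK //; ring.
Qed.

Theorem proposition8 (R : realType) (N : nat) (m M : R) (a : 'I_N -> R)
  (hm : 0 < m) (hM : M < 1) (hmM : m < M)
  (ha : forall i : 'I_N, (m <= a i)%R && (a i <= M)%R) :
  let P := P8set m M a in
  [/\ closed P, convex_set (P : set (convex_lmodType 'rV[R]_N)) & is_polytope P] /\
  ((2 < N)%N ->
     (exists s : seq 'rV[R]_N, (size s <= 2 ^ N)%N /\ is_vertex P `<=` [set` s]) /\
     is_vertex P = [set zK m M a K | K in [set: {set 'I_N}]]) /\
  (N = 1%N -> P = [set z : 'rV[R]_N | forall k, z ord0 k = m]) /\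
  (N = 2%N -> forall i1 : 'I_N, val i1 = 0%N ->
     P = [set z : 'rV[R]_N | exists t : R, m <= t <= Mbound m M a i1 /\
                                forall k, z ord0 k = t]).
Proof.
move=> P; rewrite /P P8E.
set Mv := Mbound m M a.
have [hM1 hM2] : (forall i, m <= Mv i) /\
  (forall i, \sum_(j < N) Mv j <= (2 * N%:R - 2) * Mv i - (N%:R - 2) * m).
  have [N0|N1] := posnP N.
    by split => -[i hi]; exfalso; suff : (i < 0)%N by []; rewrite -N0.
  exact: Mb_facts.
have hsub : forall x, x \in ctrs m Mv -> PS m Mv x.
  by move=> x /ctrs_mem [K ->]; exact: ctr_in.
have hcard : (#|~: (finset.set0 : {set 'I_N})| <= N)%N.
  by rewrite finset.setC0 cardsT card_ord.
have h0 : forall (z : 'rV[R]_N) l, l \in (finset.set0 : {set 'I_N}) -> z ord0 l = Mv l.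
  by move=> z l; rewrite inE.
have hPc : forall z, PS m Mv z -> conv_hull_seq (ctrs m Mv) z.
  by move=> z hz; exact: (PS_conv_aux hM1 hM2 hcard hz (h0 z)).
have hvin : forall v, is_vertex (PS m Mv) v -> v \in ctrs m Mv.
  move=> v hv; apply: (vertex_in hsub (@PS_convex _ _ m Mv) hv).
  exact/conv_inconv/hPc/hv.1.
split.
  split.
  - exact: PS_closed.
  - move=> x y l; rewrite !inE => hx hy.
    apply: PS_convex => //.
    by rewrite ge0 le1.
  - exists (ctrs m Mv); apply/seteqP; split => z hz.
      exact: hPc.
    exact: (inconv_sub hsub (@PS_convex _ _ m Mv) (conv_inconv hz)).
split.
  move=> N3; split.
    exists (ctrs m Mv); split.
      by rewrite size_map -cardE card_powerset cardsT card_ord.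
    by move=> v hv; exact: hvin.
  apply/seteqP; split => v.
    move=> hv; have /ctrs_mem [K ->] := hvin v hv.
    by exists K => //; rewrite zK_ctr.
  by case=> K _ <-; rewrite zK_ctr //; exact: ctr_vertex.
split.
  move=> N1; subst N.
  apply/seteqP; split => z.
    by move=> [hb _] k; have := hb k; rewrite /Mv Mb1 => h; apply/eqP; rewrite eq_le andbC.
  move=> hz; split => [k|i]; first by rewrite hz /Mv Mb1 lexx.
  rewrite big_ord1 !hz; lra.
move=> N2 i1 hi1; subst N.
have -> : i1 = ord0 by apply: val_inj.
apply/seteqP; split => z.
  move=> [hb hh]; exists (z ord0 ord0); split; first exact: hb.
  have g0 := hh ord0; have g1 := hh (lift ord0 ord0).
  rewrite sum_I2 in g0 g1.
  have e : z ord0 (lift ord0 ord0) = z ord0 ord0 by lra.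
  by move=> k; case: (I2_cases k) => ->.
move=> [t [ht hz]]; split => [k|i].
  by rewrite hz /Mv (Mb2 _ _ _ k ord0).
rewrite sum_I2 !hz; lra.
Qed.
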